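(* Consider binary classification with $\mathcal Y=\{-1,+1\}$ and suppose ${\mathbb P}(Y=+1)={\mathbb P}(Y=-1)$. Let $f(v)=\tfrac12|v-1|$ (Total Variation). Then a maximizer $h^*_f\in\arg\max_h D_f(P_{h\times Y}\,\|\,Q_{h\times Y})$, the maximum being over all classifiers $h:\mathcal X\to\{-1,+1\}$, is the Bayes optimal classifier, i.e. $h^*_f\in\arg\max_h {\mathbb P}(h(X)=Y)$.
   Context: $(X,Y)$ is a random pair with features $X\in\mathcal X$ and label $Y\in\{-1,+1\}$. A classifier is a measurable map $h:\mathcal X\to\{-1,+1\}$. $P_{h\times Y}$ denotes the joint distribution of $(h(X),Y)$ on $\{-1,+1\}^2$, i.e. $P_{h\times Y}(y,y')={\mathbb P}(h(X)=y,Y=y')$, and $Q_{h\times Y}$ the product of its marginals, $Q_{h\times Y}(y,y')={\mathbb P}(h(X)=y)\,{\mathbb P}(Y=y')$. For a convex $f$ with $f(1)=0$ and distributions $P,Q$ on a finite set with masses $p,q$, $D_f(P\|Q)=\sum_z q(z) f(p(z)/q(z))$. For $f(v)=\frac12|v-1|$ this is $D_f(P\|Q)=\frac12\sum_z|p(z)-q(z)|$. *)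

(* Defs.v *)
From HB Require Import structures.
From mathcomp Require Import all_boot all_order all_algebra.
From mathcomp Require Import all_classical all_reals all_analysis.
Set Implicit Arguments. Unset Strict Implicit. Unset Printing Implicit Defensive.
Import Order.TTheory GRing.Theory Num.Theory.
Local Open Scope classical_set_scope.
Local Open Scope ring_scope.

(* Labels: Y takes values in {-1,+1}, encoded as bool with true = +1, false = -1. *)

Definition Df (R : realType) (f : R -> R) (p q : bool * bool -> R) : R :=
  \sum_(z : bool * bool) q z * f (p z / q z).

Definition ftv (R : realType) (v : R) : R := 2^-1 * `|v - 1|.

Section Joint.
Context (R : realType) (d : measure_display) (Om : measurableType d)
  (Xs : Type) (P : probability Om R) (X : Om -> Xs) (Y : Om -> bool).

Definition PhY (h : Xs -> bool) (z : bool * bool) : R :=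
  fine (P [set w | h (X w) = z.1 /\ Y w = z.2]).

Definition QhY (h : Xs -> bool) (z : bool * bool) : R :=
  fine (P [set w | h (X w) = z.1]) * fine (P [set w | Y w = z.2]).

Definition acc (h : Xs -> bool) : R := fine (P [set w | h (X w) = Y w]).
End Joint.

(* Main.v *)
Require Import Defs.
From HB Require Import structures.
From mathcomp Require Import all_boot all_order all_algebra.
From mathcomp Require Import all_classical all_reals all_analysis.
From mathcomp Require Import lra ring.
Import Order.TTheory GRing.Theory Num.Theory.
Local Open Scope classical_set_scope.
Local Open Scope ring_scope.
Set Implicit Arguments. Unset Strict Implicit.

Section Aux.
Context (R : realType) (d : measure_display) (Om : measurableType d)
  (P : probability Om R).

Definition mm (A : set Om) : R := fine (P A).

Lemma mmE A : measurable A -> P A = (mm A)%:E.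
Proof. by move=> mA; rewrite /mm fineK // fin_num_measure. Qed.

Lemma mm_ge0 A : 0 <= mm A.
Proof. by rewrite /mm fine_ge0. Qed.

Lemma mmU A B : measurable A -> measurable B -> A `&` B = set0 ->
  mm (A `|` B) = mm A + mm B.
Proof.
move=> mA mB AB; rewrite /mm measureU // fineD // ?inE ?fin_num_measure //.
Qed.

Lemma mmT : mm setT = 1.
Proof. by rewrite /mm probability_setT. Qed.
End Aux.

Lemma term_eq (R : realType) (p q : R) : 0 <= q -> (q = 0 -> p = 0) ->
  q * ftv (p / q) = 2^-1 * `|p - q|.
Proof.
move=> q0 pq; have [qe|qn0] := eqVneq q 0.
  by rewrite (pq qe) qe mul0r subrr normr0 mulr0.
rewrite /ftv mulrCA; congr (_ * _).
rewrite -(ger0_norm q0) -normrM; congr `|_|.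
by rewrite ger0_norm // mulrBr mulr1 mulrCA divff // mulr1.
Qed.

Section Main.
Context (R : realType) (d : measure_display) (Om : measurableType d)
  (d' : measure_display) (Xs : measurableType d')
  (P : probability Om R) (X : Om -> Xs) (Y : Om -> bool)
  (mX : measurable_fun setT X) (mY : measurable_fun setT Y)
  (balanced : P [set w | Y w = true] = P [set w | Y w = false]).

Let D1 := Y @^-1` [set true].
Let D0 := Y @^-1` [set false].
Let mD1 : measurable D1. Proof. by rewrite -[D1]setTI; apply: mY. Qed.
Let mD0 : measurable D0. Proof. by rewrite -[D0]setTI; apply: mY. Qed.

Let half : mm P D1 = 2^-1 /\ mm P D0 = 2^-1.
Proof.
have e : mm P D1 = mm P D0 by rewrite /mm balanced.
have : mm P (D1 `|` D0) = 1.
  rewrite (_ : D1 `|` D0 = setT) ?mmT //.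
  by apply/seteqP; split => w //= _; rewrite /D1 /D0 /=; case: (Y w); [left|right].
rewrite (@mmU _ _ _ P D1 D0) //; last first.
  by apply/seteqP; split => w //=; rewrite /D1 /D0 /=; case=> ->.
rewrite -e => h; split; rewrite -?e; lra.
Qed.

Definition aa (S : set Xs) := mm P (X @^-1` S `&` D1).
Definition bb (S : set Xs) := mm P (X @^-1` S `&` D0).

Let mpre S : measurable S -> measurable (X @^-1` S).
Proof. by move=> mS; rewrite -[_ @^-1` _]setTI; apply: mX. Qed.

Definition nuO := cadd (crestr0 (charge_of_finite_measure P) mD1)
   (cscale (-1) (crestr0 (charge_of_finite_measure P) mD0)).

Lemma nuOE S : measurable S -> nuO (X @^-1` S) = (aa S - bb S)%:E.
Proof.
move=> mS; have mE := mpre mS.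
have c0 (D : set Om) (mD : measurable D) :
  crestr0 (charge_of_finite_measure P) mD (X @^-1` S) = P (X @^-1` S `&` D).
  by rewrite /crestr0 mem_set.
rewrite (_ : nuO (X @^-1` S) = P (X @^-1` S `&` D1) + (-1)%:E * P (X @^-1` S `&` D0))%E; last first.
  by rewrite /nuO /cadd /cscale /=; congr (_ + _ * _)%E; exact: c0.
rewrite !mmE //; try by apply: measurableI.
by rewrite -EFinM -EFinD mulN1r.
Qed.


Lemma hlp (x y : R) : `|x - (x + y) * 2^-1| = 2^-1 * `|x - y|.
Proof.
rewrite (_ : x - (x + y) * 2^-1 = 2^-1 * (x - y)); last by field.
by rewrite normrM ger0_norm.
Qed.

Lemma hlp' (x y : R) : `|y - (x + y) * 2^-1| = 2^-1 * `|x - y|.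
Proof.
rewrite (_ : y - (x + y) * 2^-1 = - (2^-1 * (x - y))); last by field.
by rewrite normrN normrM ger0_norm.
Qed.

Lemma split_pre S : measurable S -> mm P (X @^-1` S) = aa S + bb S.
Proof.
move=> mS; rewrite /aa /bb -mmU; try by apply: measurableI => //; apply: mpre.
  congr (mm P _); apply/seteqP; split => w /=; rewrite /D1 /D0 /=.
    by move=> Sw; case: (Y w); [left|right].
  by case=> -[].
by apply/seteqP; split => w //=; rewrite /D1 /D0 /=; case=> -[_ ->] [_].
Qed.

Lemma split_h (h : Xs -> bool) (mh : measurable_fun setT h) :
  let S1 := h @^-1` [set true] in let S0 := h @^-1` [set false] in
  [/\ measurable S1, measurable S0, aa S1 + aa S0 = 2^-1 & bb S1 + bb S0 = 2^-1].
Proof.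
move=> S1 S0.
have mS1 : measurable S1 by rewrite -[S1]setTI; apply: mh.
have mS0 : measurable S0 by rewrite -[S0]setTI; apply: mh.
have [h1 h0] := half.
have U : X @^-1` S1 `|` X @^-1` S0 = setT.
  by apply/seteqP; split => w //= _; rewrite /S1 /S0 /=; case: (h (X w)); [left|right].
have I : X @^-1` S1 `&` X @^-1` S0 = set0.
  by apply/seteqP; split => w //=; rewrite /S1 /S0 /=; case=> ->.
split => //.
  rewrite /aa -mmU; try by apply: measurableI => //; apply: mpre.
    by rewrite -setIUl U setTI.
  by rewrite setIACA setIid I set0I.
rewrite /bb -mmU; try by apply: measurableI => //; apply: mpre.
  by rewrite -setIUl U setTI.
by rewrite setIACA setIid I set0I.
Qed.

Lemma sum4 (F : bool * bool -> R) :
  \sum_(z : bool * bool) F z = F (true, true) + F (true, false) + (F (false, true) + F (false, false)).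
Proof.
rewrite (eq_bigr (fun p => (fun i j => F (i, j)) p.1 p.2)); last by case.
by rewrite -(pair_bigA _ (fun i j => F (i, j))) /= !big_bool.
Qed.

Lemma Df_h (h : Xs -> bool) (mh : measurable_fun setT h) :
  Df (@ftv R) (PhY P X Y h) (QhY P X Y h) =
  `|aa (h @^-1` [set true]) - bb (h @^-1` [set true])|.
Proof.
have [mS1 mS0 eA eB] := split_h mh.
set S1 := h @^-1` [set true] in mS1 eA eB *.
set S0 := h @^-1` [set false] in mS0 eA eB *.
have [h1 h0] := half.
have q1 := split_pre mS1. have q0 := split_pre mS0.
have a1 : 0 <= aa S1 := mm_ge0 _ _.
have a0 : 0 <= aa S0 := mm_ge0 _ _.
have b1 : 0 <= bb S1 := mm_ge0 _ _.
have b0 : 0 <= bb S0 := mm_ge0 _ _.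
rewrite /Df sum4 /PhY /QhY /=.
change (fine (P [set w | h (X w) = true /\ Y w = true])) with (aa S1).
change (fine (P [set w | h (X w) = true /\ Y w = false])) with (bb S1).
change (fine (P [set w | h (X w) = false /\ Y w = true])) with (aa S0).
change (fine (P [set w | h (X w) = false /\ Y w = false])) with (bb S0).
change (fine (P [set w | h (X w) = true])) with (mm P (X @^-1` S1)).
change (fine (P [set w | h (X w) = false])) with (mm P (X @^-1` S0)).
change (fine (P [set w | Y w = true])) with (mm P D1).
change (fine (P [set w | Y w = false])) with (mm P D0).
rewrite q1 q0 h1 h0.
rewrite !term_eq; last 8 first.
all: try (move=> ?); try lra.
rewrite !hlp !hlp'.
have -> : aa S0 - bb S0 = - (aa S1 - bb S1) by lra.
rewrite normrN; lra.
Qed.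

Lemma acc_h (h : Xs -> bool) (mh : measurable_fun setT h) :
  acc P X Y h = 2^-1 + (aa (h @^-1` [set true]) - bb (h @^-1` [set true])).
Proof.
have [mS1 mS0 eA eB] := split_h mh.
set S1 := h @^-1` [set true] in mS1 eA eB *.
set S0 := h @^-1` [set false] in mS0 eA eB *.
rewrite /acc (_ : [set w | h (X w) = Y w] = (X @^-1` S1 `&` D1) `|` (X @^-1` S0 `&` D0)).
  rewrite -/(mm P _) mmU; try by apply: measurableI => //; apply: mpre.
    rewrite -/(aa S1) -/(bb S0); lra.
  by apply/seteqP; split => w //=; rewrite /D1 /D0 /S1 /S0 /=; case=> -[-> _] [].
apply/seteqP; split => w /=; rewrite /D1 /D0 /S1 /S0 /=.
  by case: (h (X w)); case: (Y w) => //= _; [left|right].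
by case=> -[-> ->].
Qed.

End Main.

Unset Implicit Arguments.
Theorem theorem1 (R : realType) (d : measure_display) (Om : measurableType d)
  (d' : measure_display) (Xs : measurableType d')
  (P : probability Om R) (X : Om -> Xs) (Y : Om -> bool)
  (mX : measurable_fun setT X) (mY : measurable_fun setT Y)
  (balanced : P [set w | Y w = true] = P [set w | Y w = false]) :
  exists hstar : Xs -> bool,
    [/\ measurable_fun setT hstar,
        (forall h : Xs -> bool, measurable_fun setT h ->
           Df (@ftv R) (PhY P X Y h) (QhY P X Y h)
             <= Df (@ftv R) (PhY P X Y hstar) (QhY P X Y hstar))
      & (forall h : Xs -> bool, measurable_fun setT h ->
           acc P X Y h <= acc P X Y hstar)].
Proof.
have [A [N [[mA posA] [mN negN] AN AN0]]] :=
  @Hahn_decomposition _ _ _ (pushforward (nuO P mY) X).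
have key S : measurable S -> aa P X Y S - bb P X Y S <= aa P X Y A - bb P X Y A.
  move=> mS; rewrite -lee_fin -!nuOE //.
  change (pushforward (nuO P mY) X S <= pushforward (nuO P mY) X A)%E.
  rewrite (chargeDI _ mS mA) [X in (_ <= X)%E](chargeDI _ mA mS) setIC.
  apply: leeD2r; apply: (@le_trans _ _ 0%E).
    apply: negN; first exact: measurableD.
    by move=> x [Sx nAx]; have : [set: Xs] x by []; rewrite -AN => -[].
  apply: posA; first exact: measurableD.
  by move=> x [].
pose hs := fun x => `[< A x >].
have hsA : hs @^-1` [set true] = A.
  by apply/seteqP; split => x /=; rewrite /hs; [move/asboolP | move=> ?; apply/asboolP].
have mhs : measurable_fun setT hs.
  by apply: (measurable_fun_bool true); rewrite setTI hsA.
exists hs; split => // h mh.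
  rewrite (Df_h mX mY balanced mh) (Df_h mX mY balanced mhs) hsA.
  have [mS1 mS0 eA eB] := split_h mX mY balanced mh.
  have k1 := key _ mS1.
  have k0 := key _ mS0.
  have kA0 : 0 <= aa P X Y A - bb P X Y A.
    rewrite -lee_fin -nuOE //; exact: posA.
  rewrite (ger0_norm kA0) ler_norml; apply/andP; split; lra.
rewrite (acc_h mX mY balanced mh) (acc_h mX mY balanced mhs) hsA.
have [mS1 _ _ _] := split_h mX mY balanced mh.
have := key _ mS1; lra.
Qed.
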